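(* Let $\mathcal{D}$ be a category containing all finite connected colimits. Then $\mathrm{Tw}(\mathcal{D})$ has all pushouts.
   Context: For a category $\mathcal{D}$, the Grothendieck twist $\mathrm{Tw}(\mathcal{D})$ is the category whose objects are finite families $\{a_i\}_{i\in I}$ ($I$ a finite set, each $a_i$ an object of $\mathcal{D}$), and whose morphisms $\{a_i\}_{i\in I}\to\{b_j\}_{j\in J}$ are pairs consisting of a function $f:I\to J$ and morphisms $F_i:a_i\to b_{f(i)}$ in $\mathcal{D}$ for all $i\in I$; composition composes set maps and components. *)

(* Defs.v *)
From Stdlib Require Import List Relations FunctionalExtensionality.
From Stdlib Require Fin.

Set Implicit Arguments.

(** Categories (hom-equality is Leibniz equality); [comp g f] is g ∘ f. *)
Record Category := {
  Ob :> Type;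
  Hom : Ob -> Ob -> Type;
  idm : forall a, Hom a a;
  comp : forall a b c, Hom b c -> Hom a b -> Hom a c;
  comp_id_l : forall a b (f : Hom a b), comp (idm b) f = f;
  comp_id_r : forall a b (f : Hom a b), comp f (idm a) = f;
  comp_assoc : forall a b c d (h : Hom c d) (g : Hom b c) (f : Hom a b),
      comp h (comp g f) = comp (comp h g) f
}.

Arguments Hom {C} _ _ : rename.
Arguments idm {C} _ : rename.
Arguments comp {C a b c} _ _ : rename.

Record Functor (J D : Category) := {
  fobj :> J -> D;
  fmap : forall a b, @Hom J a b -> @Hom D (fobj a) (fobj b);
  fmap_id : forall a, fmap a a (idm a) = idm (fobj a);
  fmap_comp : forall a b c (g : @Hom J b c) (f : @Hom J a b),
      fmap a c (comp g f) = comp (fmap b c g) (fmap a b f)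
}.
Arguments fmap {J D} f {a b} _ : rename.

Unset Implicit Arguments.

Definition finite_type (X : Type) : Prop := exists l : list X, forall x, In x l.

Definition finite_cat (J : Category) : Prop :=
  finite_type (Ob J) /\ forall a b : J, finite_type (@Hom J a b).

Definition connected_cat (J : Category) : Prop :=
  inhabited (Ob J) /\
  forall a b : J,
    clos_refl_sym_trans J (fun x y => inhabited (@Hom J x y)) a b.

Definition is_cocone {J D : Category} (F : Functor J D) (c : D)
  (leg : forall j : J, @Hom D (F j) c) : Prop :=
  forall (j k : J) (u : @Hom J j k), comp (leg k) (fmap F u) = leg j.

Definition is_colimit {J D : Category} (F : Functor J D) (c : D)
  (leg : forall j : J, @Hom D (F j) c) : Prop :=
  is_cocone F c leg /\
  forall (c' : D) (leg' : forall j : J, @Hom D (F j) c'),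
    is_cocone F c' leg' ->
    exists u : @Hom D c c',
      (forall j, comp u (leg j) = leg' j) /\
      (forall v : @Hom D c c', (forall j, comp v (leg j) = leg' j) -> v = u).

Definition has_colimit {J D : Category} (F : Functor J D) : Prop :=
  exists (c : D) (leg : forall j : J, @Hom D (F j) c), is_colimit F c leg.

Definition has_finite_connected_colimits (D : Category) : Prop :=
  forall J : Category, finite_cat J -> connected_cat J ->
    forall F : Functor J D, has_colimit F.

Definition is_pushout {C : Category} {a b c p : C}
  (f : @Hom C a b) (g : @Hom C a c) (i1 : @Hom C b p) (i2 : @Hom C c p) : Prop :=
  comp i1 f = comp i2 g /\
  forall (q : C) (j1 : @Hom C b q) (j2 : @Hom C c q),
    comp j1 f = comp j2 g ->
    exists u : @Hom C p q,
      (comp u i1 = j1 /\ comp u i2 = j2) /\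
      (forall v : @Hom C p q, comp v i1 = j1 -> comp v i2 = j2 -> v = u).

Definition has_pushouts (C : Category) : Prop :=
  forall (a b c : C) (f : @Hom C a b) (g : @Hom C a c),
    exists (p : C) (i1 : @Hom C b p) (i2 : @Hom C c p), is_pushout f g i1 i2.

(** The Grothendieck twist Tw(D).  A finite index set I is represented by
    Fin.t n (finite sets up to bijection). *)
Section Twist.
Variable D : Category.

Record TwOb := { tw_n : nat; tw_fam : Fin.t tw_n -> Ob D }.

Definition TwHom (X Y : TwOb) : Type :=
  { f : Fin.t (tw_n X) -> Fin.t (tw_n Y) &
    forall i, @Hom D (tw_fam X i) (tw_fam Y (f i)) }.

Definition tw_id (X : TwOb) : TwHom X X :=
  existT _ (fun i => i) (fun i => idm (tw_fam X i)).

Definition tw_comp {X Y Z : TwOb} (g : TwHom Y Z) (f : TwHom X Y) : TwHom X Z :=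
  existT _ (fun i => projT1 g (projT1 f i))
           (fun i => comp (projT2 g (projT1 f i)) (projT2 f i)).

Lemma tw_comp_id_l X Y (f : TwHom X Y) : tw_comp (tw_id Y) f = f.
Proof.
  destruct f as [f F]; unfold tw_comp, tw_id; simpl; f_equal.
  apply functional_extensionality_dep; intro i; apply comp_id_l.
Qed.

Lemma tw_comp_id_r X Y (f : TwHom X Y) : tw_comp f (tw_id X) = f.
Proof.
  destruct f as [f F]; unfold tw_comp, tw_id; simpl; f_equal.
  apply functional_extensionality_dep; intro i; apply comp_id_r.
Qed.

Lemma tw_comp_assoc X Y Z W (h : TwHom Z W) (g : TwHom Y Z) (f : TwHom X Y) :
  tw_comp h (tw_comp g f) = tw_comp (tw_comp h g) f.
Proof.
  unfold tw_comp; simpl; f_equal.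
  apply functional_extensionality_dep; intro i; apply comp_assoc.
Qed.

Definition Tw : Category :=
  {| Ob := TwOb; Hom := TwHom; idm := tw_id; comp := @tw_comp;
     comp_id_l := tw_comp_id_l; comp_id_r := tw_comp_id_r;
     comp_assoc := tw_comp_assoc |}.
End Twist.

(* Main.v *)
Require Import Defs.
From Stdlib Require Import List Relations FunctionalExtensionality ClassicalEpsilon ProofIrrelevance.
From Stdlib Require Fin.
Import ListNotations.

Lemma fin_enum (n : nat) : exists l : list (Fin.t n), forall x, In x l.
Proof.
  induction n as [|n [l Hl]].
  - exists nil. intro x. inversion x.
  - exists (Fin.F1 :: map Fin.FS l). intro x.
    apply (Fin.caseS' x (fun x => In x (Fin.F1 :: map Fin.FS l))).
    + left; reflexivity.
    + intro p; right; apply in_map; apply Hl.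
Qed.

Lemma F1_FS_neq (n : nat) (k : Fin.t n) : @Fin.F1 n <> Fin.FS k.
Proof.
  intro H.
  set (h := fun (x : Fin.t (S n)) => match x with Fin.F1 => true | Fin.FS _ => false end).
  assert (h Fin.F1 = h (Fin.FS k)) by (rewrite H; reflexivity).
  discriminate.
Qed.

Lemma fin_quotient_ne (X : Type) (E : X -> X -> Prop) (HE : equivalence X E) :
  forall (x0 : X) (l : list X), exists m (cls : X -> Fin.t (S m)),
    (forall x y, In x (x0 :: l) -> In y (x0 :: l) -> (cls x = cls y <-> E x y)) /\
    (forall k, exists x, In x (x0 :: l) /\ cls x = k).
Proof.
  destruct HE as [Er Et Es].
  intros x0 l. revert x0. induction l as [|x1 l IH]; intro x0.
  - exists 0, (fun _ => Fin.F1). split.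
    + intros x y [<-|[]] [<-|[]]. split; auto.
    + intro k. exists x0. split; [left; auto|].
      apply (Fin.caseS' k (fun k => Fin.F1 = k)); [reflexivity|].
      intro p; inversion p.
  -
    destruct (IH x1) as (m & cls & Hc & Hs).
    destruct (excluded_middle_informative (exists y, In y (x1 :: l) /\ E x0 y)) as [Hex|Hnex].
    + destruct (constructive_indefinite_description _ Hex) as [y [Hy Hxy]].
      exists m, (fun z => if excluded_middle_informative (E z x0) then cls y else cls z).
      split.
      * intros x z Hx Hz.
        destruct (excluded_middle_informative (E x x0)) as [e1|e1];
        destruct (excluded_middle_informative (E z x0)) as [e2|e2].
        -- split; auto. intros _. eauto.
        -- assert (Hz' : In z (x1 :: l)) by (destruct Hz as [<-|Hz]; [exfalso; apply e2; auto| exact Hz]).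
           rewrite (Hc y z Hy Hz'). split; intro H.
           ++ eauto.
           ++ eauto.
        -- assert (Hx' : In x (x1 :: l)) by (destruct Hx as [<-|Hx]; [exfalso; apply e1; auto| exact Hx]).
           rewrite (Hc x y Hx' Hy). split; intro H; eauto.
        -- assert (Hz' : In z (x1 :: l)) by (destruct Hz as [<-|Hz]; [exfalso; apply e2; auto| exact Hz]).
           assert (Hx' : In x (x1 :: l)) by (destruct Hx as [<-|Hx]; [exfalso; apply e1; auto| exact Hx]).
           apply Hc; auto.
      * intro k. destruct (Hs k) as [z [Hz Hzk]]. exists z. split; [right; exact Hz|].
        destruct (excluded_middle_informative (E z x0)) as [e|e]; auto.
        rewrite <- Hzk. apply Hc; eauto.
    + exists (S m), (fun z => if excluded_middle_informative (E z x0) then Fin.F1 else Fin.FS (cls z)).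
      assert (Hout : forall z, In z (x0 :: x1 :: l) -> ~ E z x0 -> In z (x1 :: l)).
      { intros z [<-|Hz] Hn; [exfalso; apply Hn; auto| exact Hz]. }
      split.
      * intros x z Hx Hz.
        destruct (excluded_middle_informative (E x x0)) as [e1|e1];
        destruct (excluded_middle_informative (E z x0)) as [e2|e2].
        -- split; eauto.
        -- split; intro H.
           ++ exfalso; eapply F1_FS_neq; exact H.
           ++ exfalso; apply e2; eauto.
        -- split; intro H.
           ++ exfalso; eapply F1_FS_neq; symmetry; exact H.
           ++ exfalso; apply e1; eauto.
        -- split; intro H.
           ++ apply Fin.FS_inj in H. apply Hc; auto.
           ++ f_equal. apply Hc; auto.
      * intro k. apply (Fin.caseS' k (fun k => exists x, In x (x0 :: x1 :: l) /\
          (if excluded_middle_informative (E x x0) then Fin.F1 else Fin.FS (cls x)) = k)).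
        -- exists x0. split; [left; auto|].
           destruct (excluded_middle_informative (E x0 x0)) as [e|e]; auto. exfalso; auto.
        -- intro p. destruct (Hs p) as [z [Hz Hzp]]. exists z. split; [right; exact Hz|].
           destruct (excluded_middle_informative (E z x0)) as [e|e].
           ++ exfalso; apply Hnex; exists z; split; auto.
           ++ rewrite Hzp; reflexivity.
Qed.

Lemma fin_quotient (X : Type) (l : list X) (Hl : forall x, In x l)
  (E : X -> X -> Prop) (HE : equivalence X E) :
  exists m (cls : X -> Fin.t m),
    (forall x y, cls x = cls y <-> E x y) /\ (forall k, exists x, cls x = k).
Proof.
  destruct l as [|x0 l].
  - exists 0, (fun x => match Hl x with end). split.
    + intros x; destruct (Hl x).
    + intro k; inversion k.
  - destruct (fin_quotient_ne X E HE x0 l) as (m & cls & Hc & Hs).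
    exists (S m), cls. split.
    + intros; apply Hc; auto.
    + intro k; destruct (Hs k) as [x [_ H]]; eauto.
Qed.

Definition hcast {C : Category} {I : Type} (T : I -> Ob C) (s : Ob C) {k k' : I}
  (e : k = k') (h : @Hom C s (T k)) : @Hom C s (T k') :=
  match e in _ = k0 return @Hom C s (T k0) with eq_refl => h end.

Lemma hcast_refl {C : Category} {I : Type} (T : I -> Ob C) s k (e : k = k) h :
  @hcast C I T s k k e h = h.
Proof. rewrite (proof_irrelevance _ e eq_refl). reflexivity. Qed.

Lemma hcast_hcast {C : Category} {I : Type} (T : I -> Ob C) s k1 k2 k3
  (e1 : k1 = k2) (e2 : k2 = k3) h :
  @hcast C I T s _ _ e2 (@hcast C I T s _ _ e1 h) = hcast T s (eq_trans e1 e2) h.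
Proof. destruct e1, e2. reflexivity. Qed.

Lemma hcast_comp {C : Category} {I : Type} (T : I -> Ob C) s s' k k'
  (e : k = k') (h : @Hom C s (T k)) (g : @Hom C s' s) :
  comp (hcast T s e h) g = hcast T s' e (comp h g).
Proof. destruct e. reflexivity. Qed.

Lemma tw_hom_eq (D : Category) (X Y : TwOb D) (h1 h2 : TwHom D X Y) :
  (forall i, projT1 h1 i = projT1 h2 i) ->
  (forall i (e : projT1 h1 i = projT1 h2 i),
      hcast (tw_fam D Y) (tw_fam D X i) e (projT2 h1 i) = projT2 h2 i) ->
  h1 = h2.
Proof.
  destruct h1 as [h1 F1], h2 as [h2 F2]; simpl. intros H1 H2.
  assert (h1 = h2) by (apply functional_extensionality; exact H1). subst h2.
  f_equal. apply functional_extensionality_dep. intro i.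
  rewrite <- (H2 i eq_refl). reflexivity.
Qed.

Lemma tw_hom_eq_inv (D : Category) (X Y : TwOb D) (h1 h2 : TwHom D X Y) :
  h1 = h2 ->
  forall i (e : projT1 h1 i = projT1 h2 i),
      hcast (tw_fam D Y) (tw_fam D X i) e (projT2 h1 i) = projT2 h2 i.
Proof. intros <- i e. apply hcast_refl. Qed.

Section PO.
Variable D : Category.
Variables A B C : TwOb D.
Variable f : TwHom D A B.
Variable g : TwHom D A C.

Definition V := (Fin.t (tw_n D A) + (Fin.t (tw_n D B) + Fin.t (tw_n D C)))%type.

Definition R (x y : V) : Prop :=
  match x, y with
  | inl a, inl a' => a = a'
  | inl a, inr (inl b) => projT1 f a = b
  | inl a, inr (inr c) => projT1 g a = c
  | inr (inl b), inr (inl b') => b = b'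
  | inr (inr c), inr (inr c') => c = c'
  | _, _ => False
  end.

Definition Fob (x : V) : Ob D :=
  match x with
  | inl a => tw_fam D A a
  | inr (inl b) => tw_fam D B b
  | inr (inr c) => tw_fam D C c
  end.

Definition Fmap (x y : V) : R x y -> @Hom D (Fob x) (Fob y) :=
  match x as x0, y as y0 return R x0 y0 -> @Hom D (Fob x0) (Fob y0) with
  | inl a, inl a' => fun p => match p in _ = a0 return @Hom D (tw_fam D A a) (tw_fam D A a0)
                     with eq_refl => idm _ end
  | inl a, inr (inl b) => fun p => match p in _ = b0 return @Hom D (tw_fam D A a) (tw_fam D B b0)
                     with eq_refl => projT2 f a end
  | inl a, inr (inr c) => fun p => match p in _ = c0 return @Hom D (tw_fam D A a) (tw_fam D C c0)
                     with eq_refl => projT2 g a end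
  | inr (inl b), inr (inl b') => fun p => match p in _ = b0 return @Hom D (tw_fam D B b) (tw_fam D B b0)
                     with eq_refl => idm _ end
  | inr (inr c), inr (inr c') => fun p => match p in _ = c0 return @Hom D (tw_fam D C c) (tw_fam D C c0)
                     with eq_refl => idm _ end
  | _, _ => fun p => match p with end
  end.

Lemma R_refl x : R x x.
Proof. destruct x as [a|[b|c]]; simpl; reflexivity. Qed.

Lemma R_trans x y z : R x y -> R y z -> R x z.
Proof.
  destruct x as [a|[b|c]], y as [a'|[b'|c']], z as [a''|[b''|c'']]; simpl;
  intros; subst; try contradiction; reflexivity.
Qed.

Lemma Fmap_id x (p : R x x) : Fmap x x p = idm (Fob x).
Proof.
  destruct x as [a|[b|c]]; simpl in p; rewrite (proof_irrelevance _ p eq_refl); reflexivity.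
Qed.

Lemma Fmap_comp x y z (p : R x y) (q : R y z) (t : R x z) :
  Fmap x z t = comp (Fmap y z q) (Fmap x y p).
Proof.
  destruct x as [a|[b|c]], y as [a'|[b'|c']], z as [a''|[b''|c'']]; simpl in p, q, t;
  try contradiction; subst; rewrite (proof_irrelevance _ t eq_refl); simpl;
  first [symmetry; apply comp_id_l | symmetry; apply comp_id_r].
Qed.

Definition E := clos_refl_sym_trans V R.

Section Q.
Variable m : nat.
Variable cls : V -> Fin.t m.
Hypothesis Hcls : forall x y, cls x = cls y <-> E x y.
Hypothesis Hsurj : forall k, exists x, cls x = k.

Definition JK (K : Fin.t m) : Category.
Proof.
  refine {| Ob := {v : V | cls v = K};
            Hom := fun x y => R (proj1_sig x) (proj1_sig y);
            idm := fun x => R_refl (proj1_sig x);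
            comp := fun x y z q p => R_trans _ _ _ p q |};
  intros; apply proof_irrelevance.
Defined.

Definition FK (K : Fin.t m) : Functor (JK K) D.
Proof.
  refine {| fobj := fun x : JK K => Fob (proj1_sig x);
            fmap := fun x y p => Fmap (proj1_sig x) (proj1_sig y) p |}.
  - intros; apply Fmap_id.
  - intros; apply Fmap_comp.
Defined.

Lemma V_enum : exists l : list V, forall x, In x l.
Proof.
  destruct (fin_enum (tw_n D A)) as [lA HA].
  destruct (fin_enum (tw_n D B)) as [lB HB].
  destruct (fin_enum (tw_n D C)) as [lC HC].
  exists (map inl lA ++ map inr (map inl lB ++ map inr lC)).
  intros [a|[b|c]]; apply in_app_iff.
  - left; apply in_map; auto.
  - right; apply in_map; apply in_app_iff; left; apply in_map; auto.
  - right; apply in_map; apply in_app_iff; right; apply in_map; auto.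
Qed.

Lemma JK_finite K : finite_cat (JK K).
Proof.
  split.
  - destruct V_enum as [l Hl].
    exists (fold_right (fun v acc => match Fin.eq_dec (cls v) K with
                                      | left p => exist _ v p :: acc
                                      | right _ => acc end) nil l).
    intros [v pv]. specialize (Hl v). simpl. induction l as [|w l IH]; [destruct Hl|].
    simpl. destruct Hl as [->|Hl].
    + destruct (Fin.eq_dec (cls v) K) as [p|n]; [|contradiction].
      left. f_equal. apply proof_irrelevance.
    + destruct (Fin.eq_dec (cls w) K); [right|]; auto.
  - intros x y. destruct (excluded_middle_informative (R (proj1_sig x) (proj1_sig y))) as [h|h].
    + exists [h]. intro z. left. exact (proof_irrelevance (R (proj1_sig x) (proj1_sig y)) h z).
    + exists nil. intro z. exfalso. exact (h z).
Qed.

Lemma JK_zig K : forall v w, E v w -> forall (pv : cls v = K) (pw : cls w = K),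
  clos_refl_sym_trans (JK K) (fun x y => inhabited (@Hom (JK K) x y))
     (exist _ v pv) (exist _ w pw).
Proof.
  intros v w H. induction H as [x y r|x|x y H IH|x y z H1 IH1 H2 IH2]; intros pv pw.
  - apply rst_step. constructor. exact r.
  - rewrite (proof_irrelevance _ pv pw). apply rst_refl.
  - apply rst_sym. apply IH.
  - assert (py : cls y = K). { rewrite <- pv. symmetry. apply Hcls. exact H1. }
    apply rst_trans with (exist _ y py); auto.
Qed.

Lemma JK_connected K : connected_cat (JK K).
Proof.
  split.
  - destruct (Hsurj K) as [v pv]. constructor. exact (exist _ v pv).
  - intros [v pv] [w pw]. apply JK_zig. apply Hcls. congruence.
Qed.


Variable cobj : Fin.t m -> Ob D.
Variable cleg : forall K (j : JK K), @Hom D (FK K j) (cobj K).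
Hypothesis Hcol : forall K, is_colimit (FK K) (cobj K) (cleg K).

Definition legOf (v : V) : @Hom D (Fob v) (cobj (cls v)) := cleg (cls v) (exist _ v eq_refl).

Lemma cocone_at K v w (r : R v w) (pv : cls v = K) (pw : cls w = K) :
  @comp D (Fob v) (Fob w) (cobj K) (cleg K (exist _ w pw)) (Fmap v w r) = cleg K (exist _ v pv).
Proof. exact (proj1 (Hcol K) (exist _ v pv) (exist _ w pw) r). Qed.

Lemma leg_cast v K (e : cls v = K) : hcast cobj (Fob v) e (legOf v) = cleg K (exist _ v e).
Proof. destruct e. reflexivity. Qed.

Lemma cleg_pi K v (p p' : cls v = K) : cleg K (exist _ v p) = cleg K (exist _ v p').
Proof. rewrite (proof_irrelevance _ p p'). reflexivity. Qed.

Lemma clsR v w : R v w -> cls v = cls w.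
Proof. intro r. apply Hcls. apply rst_step. exact r. Qed.

Definition Pob : TwOb D := {| tw_n := m; tw_fam := cobj |}.
Definition i1 : TwHom D B Pob :=
  existT _ (fun b => cls (inr (inl b))) (fun b => legOf (inr (inl b))).
Definition i2 : TwHom D C Pob :=
  existT _ (fun c => cls (inr (inr c))) (fun c => legOf (inr (inr c))).

Lemma po_comm : tw_comp D i1 f = tw_comp D i2 g.
Proof.
  apply tw_hom_eq; simpl.
  - intro a. rewrite <- (clsR (inl a) (inr (inl (projT1 f a))) eq_refl).
    apply (clsR (inl a) (inr (inr (projT1 g a))) eq_refl).
  - intros a e.
    change (hcast cobj (tw_fam D A a) e (comp (legOf (inr (inl (projT1 f a)))) (projT2 f a)) =
            comp (legOf (inr (inr (projT1 g a)))) (projT2 g a)).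
    rewrite <- hcast_comp. rewrite leg_cast.
    change (projT2 f a) with (Fmap (inl a) (inr (inl (projT1 f a))) eq_refl).
    change (projT2 g a) with (Fmap (inl a) (inr (inr (projT1 g a))) eq_refl).
    unfold legOf.
    assert (pA : cls (inl a) = cls (inr (inr (projT1 g a)))) by (apply clsR; reflexivity).
    rewrite (cocone_at _ _ _ _ pA). rewrite (cocone_at _ _ _ _ pA). reflexivity.
Qed.

Variable Q : TwOb D.
Variable j1 : TwHom D B Q.
Variable j2 : TwHom D C Q.
Hypothesis Hj : tw_comp D j1 f = tw_comp D j2 g.

Definition qidx (v : V) : Fin.t (tw_n D Q) :=
  match v with
  | inl a => projT1 j1 (projT1 f a)
  | inr (inl b) => projT1 j1 b
  | inr (inr c) => projT1 j2 c
  end.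

Definition qmor (v : V) : @Hom D (Fob v) (tw_fam D Q (qidx v)) :=
  match v with
  | inl a => comp (projT2 j1 (projT1 f a)) (projT2 f a)
  | inr (inl b) => projT2 j1 b
  | inr (inr c) => projT2 j2 c
  end.

Lemma Hj1 a : projT1 j1 (projT1 f a) = projT1 j2 (projT1 g a).
Proof. exact (f_equal (fun h => projT1 h a) Hj). Qed.

Lemma Hj2 a (e : projT1 j1 (projT1 f a) = projT1 j2 (projT1 g a)) :
  hcast (tw_fam D Q) (tw_fam D A a) e (comp (projT2 j1 (projT1 f a)) (projT2 f a))
  = comp (projT2 j2 (projT1 g a)) (projT2 g a).
Proof. exact (tw_hom_eq_inv D A Q _ _ Hj a e). Qed.

Lemma qidx_R v w : R v w -> qidx v = qidx w.
Proof.
  destruct v as [a|[b|c]], w as [a'|[b'|c']]; simpl; intros; subst; try contradiction;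
  try reflexivity. apply Hj1.
Qed.

Lemma qidx_E v w : E v w -> qidx v = qidx w.
Proof.
  intro H; induction H; [apply qidx_R; auto | reflexivity | auto | congruence].
Qed.

Lemma qcocone v w (r : R v w) t (ev : qidx v = t) (ew : qidx w = t) :
  comp (hcast (tw_fam D Q) (Fob w) ew (qmor w)) (Fmap v w r)
  = hcast (tw_fam D Q) (Fob v) ev (qmor v).
Proof.
  revert ev ew.
  destruct v as [a|[b|c]], w as [a'|[b'|c']]; simpl in r; try contradiction; subst;
  intros ev ew; destruct ew; simpl; rewrite ?hcast_refl.
  - apply comp_id_r.
  - reflexivity.
  - rewrite Hj2. reflexivity.
  - apply comp_id_r.
  - apply comp_id_r.
Qed.

Definition rep (K : Fin.t m) : V := proj1_sig (constructive_indefinite_description _ (Hsurj K)).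
Lemma rep_spec K : cls (rep K) = K.
Proof. unfold rep. destruct (constructive_indefinite_description _ (Hsurj K)); auto. Qed.

Definition u0 (K : Fin.t m) := qidx (rep K).

Lemma ev v K (pv : cls v = K) : qidx v = u0 K.
Proof. apply qidx_E. apply Hcls. rewrite rep_spec. exact pv. Qed.

Definition leg' K (j : JK K) : @Hom D (FK K j) (tw_fam D Q (u0 K)) :=
  hcast (tw_fam D Q) (Fob (proj1_sig j)) (ev _ _ (proj2_sig j)) (qmor (proj1_sig j)).

Lemma leg'_cocone K : is_cocone (FK K) (tw_fam D Q (u0 K)) (leg' K).
Proof.
  intros [v pv] [w pw] r. unfold leg'. simpl. apply qcocone.
Qed.

Definition uK K : @Hom D (cobj K) (tw_fam D Q (u0 K)) :=
  proj1_sig (constructive_indefinite_description _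
     (proj2 (Hcol K) _ (leg' K) (leg'_cocone K))).

Lemma uK_spec K : (forall j, comp (uK K) (cleg K j) = leg' K j) /\
  (forall v, (forall j, comp v (cleg K j) = leg' K j) -> v = uK K).
Proof. unfold uK. destruct (constructive_indefinite_description _ _). auto. Qed.

Definition uu : TwHom D Pob Q := existT _ u0 uK.


Lemma hcast_pi {CC : Category} {I : Type} (T : I -> Ob CC) s k k' (e e' : k = k') h :
  hcast T s e h = hcast T s e' h.
Proof. rewrite (proof_irrelevance _ e e'). reflexivity. Qed.

Lemma hcast_inv {CC : Category} {I : Type} (T : I -> Ob CC) s k k' (e : k = k') h h' :
  hcast T s e h = h' -> h = hcast T s (eq_sym e) h'.
Proof. intros <-. destruct e. reflexivity. Qed.

Lemma uu_i1 : tw_comp D uu i1 = j1.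
Proof.
  apply tw_hom_eq; simpl.
  - intro b. symmetry. exact (ev (inr (inl b)) _ eq_refl).
  - intros b e.
    pose proof (proj1 (uK_spec (cls (inr (inl b)))) (exist _ (inr (inl b)) eq_refl)) as H.
    unfold legOf. simpl in H.
    transitivity (hcast (tw_fam D Q) _ e (leg' _ (exist _ (inr (inl b)) eq_refl))).
    { apply f_equal. exact H. }
    unfold leg'. simpl. rewrite hcast_hcast. apply hcast_refl.
Qed.

Lemma uu_i2 : tw_comp D uu i2 = j2.
Proof.
  apply tw_hom_eq; simpl.
  - intro c. symmetry. exact (ev (inr (inr c)) _ eq_refl).
  - intros c e.
    pose proof (proj1 (uK_spec (cls (inr (inr c)))) (exist _ (inr (inr c)) eq_refl)) as H.
    unfold legOf. simpl in H.
    transitivity (hcast (tw_fam D Q) _ e (leg' _ (exist _ (inr (inr c)) eq_refl))).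
    { apply f_equal. exact H. }
    unfold leg'. simpl. rewrite hcast_hcast. apply hcast_refl.
Qed.

Lemma uu_unique (w : TwHom D Pob Q) :
  tw_comp D w i1 = j1 -> tw_comp D w i2 = j2 -> w = uu.
Proof.
  intros H1 H2. destruct w as [w0 W].
  assert (HB : forall b, w0 (cls (inr (inl b))) = projT1 j1 b)
    by (intro b; exact (f_equal (fun h => projT1 h b) H1)).
  assert (HC : forall c, w0 (cls (inr (inr c))) = projT1 j2 c)
    by (intro c; exact (f_equal (fun h => projT1 h c) H2)).
  assert (Hidx : forall v, w0 (cls v) = qidx v).
  { intros [a|[b|c]]; simpl; auto.
    rewrite (clsR (inl a) (inr (inl (projT1 f a))) eq_refl). apply HB. }
  pose proof (tw_hom_eq_inv D B Q _ _ H1) as HB2. simpl in HB2.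
  pose proof (tw_hom_eq_inv D C Q _ _ H2) as HC2. simpl in HC2.
  assert (LB : forall b K (pv : cls (inr (inl b)) = K) (e : w0 K = u0 K),
     @comp D (Fob (inr (inl b))) (cobj K) _ (hcast (tw_fam D Q) (cobj K) e (W K))
        (cleg K (exist _ (inr (inl b)) pv)) = hcast (tw_fam D Q) _ (ev _ _ pv) (qmor (inr (inl b)))).
  { intros b K pv e. subst K. rewrite hcast_comp.
    specialize (HB2 b (HB b)). apply hcast_inv in HB2.
    unfold legOf in HB2. change (tw_fam D B b) with (Fob (inr (inl b))) in HB2.
    etransitivity; [apply f_equal; exact HB2|]. rewrite hcast_hcast. apply hcast_pi. }
  assert (LC : forall c K (pv : cls (inr (inr c)) = K) (e : w0 K = u0 K),
     @comp D (Fob (inr (inr c))) (cobj K) _ (hcast (tw_fam D Q) (cobj K) e (W K))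
        (cleg K (exist _ (inr (inr c)) pv)) = hcast (tw_fam D Q) _ (ev _ _ pv) (qmor (inr (inr c)))).
  { intros c K pv e. subst K. rewrite hcast_comp.
    specialize (HC2 c (HC c)). apply hcast_inv in HC2.
    unfold legOf in HC2. change (tw_fam D C c) with (Fob (inr (inr c))) in HC2.
    etransitivity; [apply f_equal; exact HC2|]. rewrite hcast_hcast. apply hcast_pi. }
  apply tw_hom_eq; simpl.
  - intro K. transitivity (w0 (cls (rep K))); [rewrite rep_spec; reflexivity|]. apply Hidx.
  - intros K e. apply (proj2 (uK_spec K)). intros [v pv].
    destruct v as [a|[b|c]].
    + assert (p' : cls (inr (inl (projT1 f a))) = K)
        by (rewrite <- pv; symmetry; apply clsR; reflexivity).
      rewrite <- (cocone_at K (inl a) (inr (inl (projT1 f a))) eq_refl pv p').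
      rewrite comp_assoc.
      transitivity (comp (hcast (tw_fam D Q) (Fob (inr (inl (projT1 f a)))) (ev _ _ p')
          (qmor (inr (inl (projT1 f a))))) (Fmap (inl a) (inr (inl (projT1 f a))) eq_refl)).
      { f_equal. apply LB. } simpl.
      rewrite hcast_comp. unfold leg'. simpl. apply hcast_pi.
    + apply LB.
    + apply LC.
Qed.

Lemma po_univ : exists u : TwHom D Pob Q,
  (tw_comp D u i1 = j1 /\ tw_comp D u i2 = j2) /\
  (forall v : TwHom D Pob Q, tw_comp D v i1 = j1 -> tw_comp D v i2 = j2 -> v = u).
Proof. exists uu. split; [split; [apply uu_i1|apply uu_i2]|apply uu_unique]. Qed.

End Q.
End PO.

Theorem mainTheorem5 (D : Category) :
  has_finite_connected_colimits D -> has_pushouts (Tw D).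
Proof.
  intros H A B C f g.
  destruct (V_enum D A B C) as [l Hl].
  destruct (fin_quotient _ l Hl (E D A B C f g) (clos_rst_is_equiv _ _))
    as (m & cls & Hcls & Hsurj).
  assert (Hc : forall K, exists c (leg : forall j : JK D A B C f g m cls K,
      @Hom D (FK D A B C f g m cls K j) c), is_colimit (FK D A B C f g m cls K) c leg).
  { intro K. apply H. apply JK_finite. apply JK_connected; auto. }
  set (cobj := fun K => proj1_sig (constructive_indefinite_description _ (Hc K))).
  assert (Hc2 : forall K, exists (leg : forall j : JK D A B C f g m cls K,
      @Hom D (FK D A B C f g m cls K j) (cobj K)), is_colimit (FK D A B C f g m cls K) (cobj K) leg).
  { intro K. unfold cobj. destruct (constructive_indefinite_description _ (Hc K)); auto. }
  set (cleg := fun K => proj1_sig (constructive_indefinite_description _ (Hc2 K))).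
  assert (Hcol : forall K, is_colimit (FK D A B C f g m cls K) (cobj K) (cleg K)).
  { intro K. unfold cleg. destruct (constructive_indefinite_description _ (Hc2 K)); auto. }
  exists (Pob D m cobj), (i1 D A B C f g m cls cobj cleg), (i2 D A B C f g m cls cobj cleg).
  split.
  - apply po_comm; auto.
  - intros Q j1 j2 Hj. apply po_univ; auto.
Qed.
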